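(* With the notation of the context, if $Q(\alpha_i)=Q^*(\alpha_i)=\lg\frac{N+i}{N+i-1}$ for all $1\le i\le N$, then $L(Q)=H(p)+D(p\|q)$.
   Context: Let $\mathcal S$ be a finite alphabet with $|\mathcal S|\ge2$, $p$ a probability distribution on $\mathcal S$ with $p(s)>0$, $N_s$ ($s\in\mathcal S$) positive integers, $N=\sum_sN_s$, $q(s)=N_s/N$, $\lg=\log_2$, and $\kappa_s=\lceil\lg(N/N_s)\rceil$ (so $\kappa_s\ge1$ and $N\le 2^{\kappa_s}N_s<2N$). Let $\alpha_1,\dots,\alpha_N$ be the states. For a probability distribution $Q$ on $\{\alpha_1,\dots,\alpha_N\}$ define $L(Q)=\sum_s p(s)\sum_{i=1}^N Q(\alpha_i)\ell_s(i)$, where $\ell_s(i)=\kappa_s-1$ if $i\le 2^{\kappa_s}N_s-N$ and $\ell_s(i)=\kappa_s$ otherwise. (This is the average code length of the Yokoo–Dubé-type sAEDS, whose state $\alpha_i$ encodes $s$ with $\ell_s(i)$ bits, when $Q$ is its stationary distribution with states indexed in non-increasing order of $Q$.) $Q^*(\alpha_i)=\lg\frac{N+i}{N+i-1}$, which sums to 1. $H(p)=-\sum p\lg p$, $D(p\|q)=\sum p\lg(p/q)$. *)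

(* Defs.v *)
From mathcomp Require Import all_boot all_order all_algebra.
From mathcomp Require Import all_classical all_reals all_analysis.
Set Implicit Arguments. Unset Strict Implicit. Unset Printing Implicit Defensive.
Import Order.TTheory GRing.Theory Num.Theory.
Local Open Scope ring_scope.

Section Defs.
Variables (R : realType) (S : finType).

Definition lg (x : R) : R := ln x / ln 2.

Definition Ntot (Ns : S -> nat) : nat := (\sum_(s : S) Ns s)%N.

Definition qdist (Ns : S -> nat) (s : S) : R := (Ns s)%:R / (Ntot Ns)%:R.

Definition kappa (Ns : S -> nat) (s : S) : int :=
  Num.ceil (lg ((Ntot Ns)%:R / (Ns s)%:R)).

Definition ell (Ns : S -> nat) (s : S) (i : nat) : R :=
  if (i%:R <= (2 : R) ^ (kappa Ns s) * (Ns s)%:R - (Ntot Ns)%:R)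
  then (kappa Ns s)%:~R - 1 else (kappa Ns s)%:~R.

(* average code length; states alpha_1..alpha_N are indexed by i = 1..N,
   Q i is the probability of alpha_i *)
Definition avg_len (p : S -> R) (Ns : S -> nat) (Q : nat -> R) : R :=
  \sum_(s : S) p s * \sum_(1 <= i < (Ntot Ns).+1) Q i * ell Ns s i.

Definition Qstar (N : nat) (i : nat) : R :=
  lg ((N + i)%:R / (N + i - 1)%:R).

Definition entropy (p : S -> R) : R := - \sum_(s : S) p s * lg (p s).

Definition kl_div (p q : S -> R) : R := \sum_(s : S) p s * lg (p s / q s).

End Defs.

(* Main.v *)
Require Import Defs.
From mathcomp Require Import all_boot all_order all_algebra.
From mathcomp Require Import all_classical all_reals all_analysis.
From mathcomp Require Import ring lra zify.
Import Order.TTheory GRing.Theory Num.Theory.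
Local Open Scope ring_scope.

Lemma ln2_gt0 (R : realType) : 0 < ln (2:R).
Proof. by apply: ln_gt0; rewrite ltr1n. Qed.

Lemma Qstar_tel (R : realType) (N a b : nat) : (0 < N)%N -> (1 <= a <= b)%N ->
  \sum_(a <= i < b) Qstar R N i =
  (ln ((N + b - 1)%:R : R) - ln ((N + a - 1)%:R)) / ln 2.
Proof.
move=> N0 /andP[a1 ab].
rewrite mulrBl.
apply: (telescope_sumr_eq (fun j => ln ((N + j - 1)%:R : R) / ln 2)) => // k /andP[ak kb].
rewrite /Qstar /lg addnS !subn1 /= -mulrBl ln_div //.
  by rewrite posrE ltr0n; lia.
by rewrite posrE ltr0n; lia.
Qed.

Lemma per_s (R : realType) (S : finType) (Ns : S -> nat) (Q : nat -> R) (s : S) :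
  (0 < Ns s)%N -> (Ns s <= Ntot Ns)%N ->
  (forall i, (1 <= i <= Ntot Ns)%N -> Q i = Qstar R (Ntot Ns) i) ->
  \sum_(1 <= i < (Ntot Ns).+1) Q i * ell R Ns s i
  = (ln ((Ntot Ns)%:R : R) - ln ((Ns s)%:R)) / ln 2.
Proof.
set N := Ntot Ns => Ns0 NsN HQ.
have N0 : (0 < N)%N by lia.
have L0 := ln2_gt0 R.
set x : R := lg ((N%:R : R) / (Ns s)%:R).
have xE : x = (ln (N%:R : R) - ln (Ns s)%:R) / ln 2.
  by rewrite /x /lg ln_div // posrE ltr0n.
have x0 : 0 <= x.
  rewrite /x /lg divr_ge0 //; last exact: ltW.
  by apply: ln_ge0; rewrite ler_pdivlMr ?ltr0n // mul1r ler_nat.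
have [n kn] : exists n : nat, kappa R Ns s = n%:Z.
  have : (0 <= kappa R Ns s)%R by rewrite /kappa ceil_ge0 -/x; lra.
  by case: (kappa R Ns s) => [n|n] // _; exists n.
have [xlo xhi] : (n%:R - 1 < x) /\ (x <= n%:R).
  have := ceil_itv x; rewrite -/x -[Num.ceil x]/(kappa R Ns s) kn.
  by move=> /andP[h1 h2]; split; move: h1 h2; rewrite ?intrD ?intrB //= => h1 h2; lra.
set A := (2 ^ n * Ns s)%N.
have lnA : ln (A%:R : R) = n%:R * ln 2 + ln (Ns s)%:R.
  rewrite /A natrM natrX lnM ?posrE ?ltr0n ?exprn_gt0 // ?expn_gt0 //.
  by rewrite lnXn // mulr_natl.
have lnN2 : ln ((N + N)%:R : R) = ln 2 + ln (N%:R).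
  by rewrite addnn -mul2n natrM lnM // posrE ltr0n.
have NA : (N <= A)%N.
  rewrite -(ler_nat R) -ler_ln ?posrE ?ltr0n ?muln_gt0 ?expn_gt0 //.
  rewrite lnA.
  have : 0 <= (n%:R - x) * ln 2 by rewrite mulr_ge0 //; [lra | exact: ltW].
  rewrite xE mulrBl mulfVK ?gt_eqF //; lra.
have AN : (A < N + N)%N.
  rewrite -(ltr_nat R) -ltr_ln ?posrE ?ltr0n ?muln_gt0 ?expn_gt0 ?addn_gt0 ?N0 //.
  rewrite lnA lnN2.
  have : 0 < (x - (n%:R - 1)) * ln 2 by rewrite mulr_gt0 //; lra.
  rewrite xE mulrBl mulfVK ?gt_eqF //; lra.
set M := (A - N)%N.
have ellE i : ell R Ns s i = if (i <= M)%N then n%:R - 1 else n%:R.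
  rewrite /ell kn -[(2:R) ^ n%:Z]/((2:R) ^+ n).
  have -> : (2:R) ^+ n * (Ns s)%:R - (Ntot Ns)%:R = M%:R.
    by rewrite /M natrB // natrM natrX.
  by rewrite ler_nat.
rewrite (@big_cat_nat _ _ _ M.+1) /=; [|lia|lia].
rewrite (@eq_big_nat _ _ _ 1 M.+1 _ (fun i => Qstar R N i * (n%:R - 1))); last first.
  by move=> i Hi; rewrite HQ ?ellE; [rewrite ifT //; lia | lia].
rewrite (@eq_big_nat _ _ _ M.+1 N.+1 _ (fun i => Qstar R N i * n%:R)); last first.
  by move=> i Hi; rewrite HQ ?ellE; [rewrite ifF //; lia | lia].
have tel c a b : (1 <= a <= b)%N -> \sum_(a <= i < b) Qstar R N i * c =
   (ln ((N + b - 1)%:R : R) - ln ((N + a - 1)%:R)) / ln 2 * c.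
  by move=> hab; rewrite -big_distrl /= Qstar_tel.
rewrite !tel; [|lia|lia].
have -> : (N + M.+1 - 1 = A)%N by lia.
have -> : (N + N.+1 - 1 = N + N)%N by lia.
have -> : (N + 1 - 1 = N)%N by lia.
rewrite lnA lnN2.
field; rewrite gt_eqF //.
Qed.

Theorem lemma1 (R : realType) (S : finType) (p : S -> R) (Ns : S -> nat)
    (Q : nat -> R) :
  (1 < #|S|)%N ->
  (forall s, 0 < p s) -> \sum_(s : S) p s = 1 ->
  (forall s, (0 < Ns s)%N) ->
  (forall i, (1 <= i <= Ntot Ns)%N -> Q i = Qstar R (Ntot Ns) i) ->
  avg_len p Ns Q = entropy p + kl_div p (qdist R Ns).
Proof.
move=> _ p0 _ Ns0 HQ.
have NsN s : (Ns s <= Ntot Ns)%N.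
  by rewrite /Ntot (bigD1 s) //=; apply: leq_addr.
rewrite /avg_len /entropy /kl_div -sumrN -big_split /=.
apply: eq_bigr => s _.
rewrite per_s //.
have Nsp : 0 < ((Ns s)%:R : R) by rewrite ltr0n.
have Np : 0 < ((Ntot Ns)%:R : R) by rewrite ltr0n; exact: leq_trans (Ns0 s) (NsN s).
rewrite /qdist /lg invf_div lnM ?posrE ?divr_gt0 // ln_div ?posrE //.
by field; rewrite gt_eqF // ln2_gt0.
Qed.
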